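(* Let $(N,\underline X)\in\aleph^{FGM*}$. For every $n\in A_N$ and $x\ge0$, $$F_{X\mid N=n}(x)=\frac{1}{\gamma_N(n)}\sum_{(i_0,i_1)\in\{0,1\}^2}f_{I_0,I_1}(i_0,i_1)\,\gamma_{N_{[1+i_0]}}(n)\,F_{X_{[1+i_1]}}(x),$$ where $f_{I_0,I_1}(i_0,i_1)=\tfrac14\big(1+(-1)^{i_0+i_1}\theta_{01}\big)$, or equivalently $$F_{X\mid N=n}(x)=F_X(x)+\frac{\theta_{01}}{4}\,\frac{\gamma_{N_{[2]}}(n)-\gamma_{N_{[1]}}(n)}{\gamma_N(n)}\big(F_{X_{[2]}}(x)-F_{X_{[1]}}(x)\big).$$ Here $F_{X\mid N=n}$ is the conditional cdf of $X_1$ given $N=n$ (which, by exchangeability, is that of any $X_j$).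
   Context: Collective risk model (CRM): $N$ is a random variable with values in $\mathbb{N}_0$, cdf $F_N$, pmf $\gamma_N(n)=\Pr(N=n)$ and support $A_N=\{n:\gamma_N(n)>0\}$; $\underline X=\{X_j\}_{j\ge1}$ is a sequence of identically distributed strictly positive random variables with common cdf $F_X$ (generic copy $X$). A $d$-variate FGM copula with parameters $\theta_{j_1\dots j_k}$ is $C(u_1,\dots,u_d)=\prod_{m=1}^d u_m\big(1+\sum_{k=2}^d\sum_{j_1<\dots<j_k}\theta_{j_1\dots j_k}\bar u_{j_1}\cdots\bar u_{j_k}\big)$, $\bar u=1-u$, with parameters such that $1+\sum_{k}\sum_{j_1<\dots<j_k}\theta_{j_1\dots j_k}\varepsilon_{j_1}\cdots\varepsilon_{j_k}\ge0$ for all $\varepsilon\in\{-1,1\}^d$. A CRM belongs to $\aleph^{FGM}$ if for every $k\in\mathbb{N}_1$, $k\le\sup A_N$, $F_{N,X_1,\dots,X_k}(n,x_1,\dots,x_k)=C_k(F_N(n),F_X(x_1),\dots,F_X(x_k))$ for a $(k+1)$-variate FGM copula $C_k$ with coordinates indexed $0,\dots,k$ (index $0$ for $N$). It belongs to $\aleph^{FGM*}$ if in addition $(N,X_1,\dots,X_k)\overset d=(N,X_{\pi(1)},\dots,X_{\pi(k)})$ for all such $k$ and all permutations $\pi$; then $\theta_{0j}=\theta_{01}$, $\theta_{ij}=\theta_{12}$, $\theta_{0ij}=\theta_{012}$ for all $1\le i<j$. For a random variable $Y$, $Y_{[1]}$, $Y_{[2]}$ denote the minimum and maximum of two iid copies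 of $Y$, with cdfs $F_{Y_{[j]}}$; $\gamma_{N_{[j]}}(n)=\Pr(N_{[j]}=n)$. *)

(* Defs.v *)
From HB Require Import structures.
From mathcomp Require Import all_boot all_order all_fingroup all_algebra.
From mathcomp Require Import all_classical all_reals all_analysis.
Set Implicit Arguments. Unset Strict Implicit. Unset Printing Implicit Defensive.
Import Order.TTheory GRing.Theory Num.Theory.
Local Open Scope classical_set_scope.
Local Open Scope ring_scope.

Section CRM.
Context {R : realType} {d : measure_display} {T : measurableType d}.

Definition pr (mu : set T -> \bar R) (A : set T) : R := fine (mu A).
Definition pr2 (mu : set (T * T) -> \bar R) (A : set (T * T)) : R := fine (mu A).

Variable P : probability T R.

Definition cdfN (N : T -> nat) (n : nat) : R := pr P [set t | (N t <= n)%N].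
Definition pmfN (N : T -> nat) (n : nat) : R := pr P [set t | N t = n].
Definition cdfR (Y : T -> R) (x : R) : R := pr P [set t | Y t <= x].

(* N_[1], N_[2]: min / max of two iid copies of N, realised on (T*T, P \x P) *)
Definition pmf_min (N : T -> nat) (n : nat) : R :=
  pr2 (P \x P)%E [set p | minn (N p.1) (N p.2) = n].
Definition pmf_max (N : T -> nat) (n : nat) : R :=
  pr2 (P \x P)%E [set p | maxn (N p.1) (N p.2) = n].
(* Y_[1], Y_[2]: min / max of two iid copies of Y *)
Definition cdf_min (Y : T -> R) (x : R) : R :=
  pr2 (P \x P)%E [set p | Num.min (Y p.1) (Y p.2) <= x].
Definition cdf_max (Y : T -> R) (x : R) : R :=
  pr2 (P \x P)%E [set p | Num.max (Y p.1) (Y p.2) <= x].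

Definition cond_cdf (N : T -> nat) (Y : T -> R) (n : nat) (x : R) : R :=
  pr P ([set t | Y t <= x] `&` [set t | N t = n]) / pmfN N n.

Definition le_supA (N : T -> nat) (k : nat) : Prop :=
  exists m : nat, 0 < pmfN N m /\ (k <= m)%N.

End CRM.

Definition FGM_copula {R : realType} (m : nat) (th : {set 'I_m} -> R)
    (u : 'I_m -> R) : R :=
  (\prod_(j < m) u j) *
  (1 + \sum_(S : {set 'I_m} | (2 <= #|S|)%N) th S * \prod_(j in S) (1 - u j)).

Definition FGM_admissible {R : realType} (m : nat) (th : {set 'I_m} -> R) : Prop :=
  forall eps : 'I_m -> bool,
    0 <= 1 + \sum_(S : {set 'I_m} | (2 <= #|S|)%N)
                th S * \prod_(j in S) (if eps j then 1 else -1).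

(* The collective risk model: N nat-valued, X_j (j >= 1) identically
   distributed, strictly positive.  X 0 is unused. *)
Definition CRM {R : realType} {d : measure_display} {T : measurableType d}
    (P : probability T R) (N : T -> nat) (X : nat -> T -> R) : Prop :=
  (forall n : nat, measurable [set t | N t = n]) /\
  (forall j : nat, measurable_fun setT (X j)) /\
  (forall j : nat, (0 < j)%N -> forall t, 0 < X j t) /\
  (forall j : nat, (0 < j)%N -> forall B : set R, measurable B ->
       P (X j @^-1` B) = P (X 1%N @^-1` B)).

(* (N, X) in aleph^FGM with copula parameters theta k for C_k (coordinates
   0..k, index 0 for N) *)
Definition in_FGM {R : realType} {d : measure_display} {T : measurableType d}
    (P : probability T R) (N : T -> nat) (X : nat -> T -> R)
    (theta : forall k : nat, {set 'I_k.+1} -> R) : Prop :=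
  forall k : nat, (0 < k)%N -> le_supA P N k ->
    FGM_admissible (theta k) /\
    forall (n : nat) (xs : 'I_k -> R),
      pr P ([set t | (N t <= n)%N] `&` [set t | forall i : 'I_k, X i.+1 t <= xs i])
      = FGM_copula (theta k)
          (fun i : 'I_k.+1 => if unlift ord0 i is Some j
                              then cdfR P (X 1%N) (xs j) else cdfN P N n).

Definition exchangeable {R : realType} {d : measure_display} {T : measurableType d}
    (P : probability T R) (N : T -> nat) (X : nat -> T -> R) : Prop :=
  forall k : nat, (0 < k)%N -> le_supA P N k ->
    forall (s : {perm 'I_k}) (A : set nat) (B : 'I_k -> set R),
      (forall i, measurable (B i)) ->
      P ([set t | A (N t)] `&` [set t | forall i : 'I_k, B i (X (s i).+1 t)])
      = P ([set t | A (N t)] `&` [set t | forall i : 'I_k, B i (X i.+1 t)]).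

Definition in_FGMstar {R : realType} {d : measure_display} {T : measurableType d}
    (P : probability T R) (N : T -> nat) (X : nat -> T -> R)
    (theta : forall k : nat, {set 'I_k.+1} -> R) : Prop :=
  CRM P N X /\ in_FGM P N X theta /\ exchangeable P N X.

Definition theta01 {R : realType} (theta : forall k : nat, {set 'I_k.+1} -> R) : R :=
  theta 1%N ([set ord0; ord_max] : {set 'I_2})%SET.

(* Main.v *)
Require Import Defs.
From HB Require Import structures.
From mathcomp Require Import all_boot all_order all_fingroup all_algebra.
From mathcomp Require Import all_classical all_reals all_analysis.
From mathcomp Require Import ring lra zify.
Import Order.TTheory GRing.Theory Num.Theory.
Local Open Scope classical_set_scope.
Local Open Scope ring_scope.

Section H.
Context {R : realType} {d : measure_display} {T : measurableType d}.
Variable Q : probability T R.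

Lemma prE {A : set T} : measurable A -> Q A = (fine (Q A))%:E.
Proof. by move=> mA; rewrite fineK // fin_num_measure. Qed.

Lemma pr_ge0 (A : set T) : 0 <= fine (Q A).
Proof. by apply: fine_ge0. Qed.

Lemma prU (A B : set T) : measurable A -> measurable B -> A `&` B = set0 ->
  fine (Q (A `|` B)) = fine (Q A) + fine (Q B).
Proof.
move=> mA mB AB; rewrite measureU //.
by rewrite fineD // fin_num_measure.
Qed.

Lemma prC (A : set T) : measurable A -> fine (Q (~` A)) = 1 - fine (Q A).
Proof. by move=> mA; rewrite probability_setC // fineB // fin_num_measure. Qed.

Lemma prT : fine (Q setT) = 1.
Proof. by rewrite probability_setT. Qed.
End H.

Lemma prX {R : realType} {d : measure_display} {T : measurableType d}
  (P : probability T R) (A B : set T) : measurable A -> measurable B ->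
  fine ((P \x P)%E (A `*` B)) = fine (P A) * fine (P B).
Proof.
move=> mA mB; rewrite product_measure1E // fineM // fin_num_measure //.
Qed.

Lemma card2 : forall S : {set 'I_2}, (2 <= #|S|)%N = (S == [set: 'I_2]%SET).
Proof.
move=> S; apply/idP/eqP => [h|->]; last by rewrite cardsT card_ord.
by apply/eqP; rewrite eqEcard cardsT card_ord h andbT; apply/fintype.subsetP => i; rewrite inE.
Qed.

Lemma set01 : ([set ord0; ord_max]%SET : {set 'I_2}) = [set: 'I_2]%SET.
Proof. by apply/setP => i; rewrite !inE; case: i => [[|[|]]]. Qed.

Lemma FGM2 {R : realType} (th : {set 'I_2} -> R) (u : 'I_2 -> R) :
  FGM_copula th u = u ord0 * u ord_max * (1 + th [set: 'I_2]%SET * ((1 - u ord0) * (1 - u ord_max))).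
Proof.
rewrite /FGM_copula (big_pred1 [set: 'I_2]%SET); last by move=> S; rewrite /= card2.
rewrite !big_ord_recr big_ord0 /=.
rewrite (eq_bigl (fun j => true)); last by move=> j; rewrite inE.
rewrite !big_ord_recr big_ord0 /= !mul1r.
by have -> : widen_ord (leqnSn 1) ord_max = ord0 :> 'I_2 by apply: val_inj.
Qed.

Lemma prXU {R : realType} {d : measure_display} {T : measurableType d}
  (P : probability T R) (A1 B1 A2 B2 : set T) :
  measurable A1 -> measurable B1 -> measurable A2 -> measurable B2 ->
  (A1 `*` B1) `&` (A2 `*` B2) = set0 ->
  fine ((P \x P)%E ((A1 `*` B1) `|` (A2 `*` B2)))
   = fine (P A1) * fine (P B1) + fine (P A2) * fine (P B2).
Proof.
move=> m1 m2 m3 m4 h.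
rewrite (prU (P \x P)%E _ _ (measurableX m1 m2) (measurableX m3 m4) h).
by rewrite !prX.
Qed.

Theorem mainTheorem3 (R : realType) (d : measure_display) (T : measurableType d)
    (P : probability T R) (N : T -> nat) (X : nat -> T -> R)
    (theta : forall k : nat, {set 'I_k.+1} -> R) :
  in_FGMstar P N X theta ->
  forall (n : nat) (x : R), 0 < pmfN P N n -> 0 <= x ->
    cond_cdf P N (X 1%N) n x
      = (pmfN P N n)^-1 *
        (\sum_(i0 : bool) \sum_(i1 : bool)
           (1 / 4 * (1 + (-1) ^+ (i0 + i1)%N * theta01 theta)) *
           (if i0 then pmf_max P N n else pmf_min P N n) *
           (if i1 then cdf_max P (X 1%N) x else cdf_min P (X 1%N) x))
    /\
    cond_cdf P N (X 1%N) n x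
      = cdfR P (X 1%N) x
        + theta01 theta / 4
          * ((pmf_max P N n - pmf_min P N n) / pmfN P N n)
          * (cdf_max P (X 1%N) x - cdf_min P (X 1%N) x).
Proof.
move=> [[mN [mX [Xpos Xid]]] [HF Hex]] n x pn x0.
set A := [set t | X 1%N t <= x].
have mA : measurable A.
  have h := mX 1%N measurableT [set` `]-oo, x]] (measurable_itv _).
  rewrite setTI in h.
  suff -> : A = X 1%N @^-1` [set` `]-oo, x]] by [].
  by apply/funext => t; apply/propext; rewrite /A /preimage /= in_itv /=.
have mle : forall m, measurable [set t | (N t <= m)%N].
  elim => [|m IH].
    have -> : [set t | (N t <= 0)%N] = [set t | N t = 0%N] by
      apply/funext => t; apply/propext; split => /= h; lia.
    exact: mN.
  have -> : [set t | (N t <= m.+1)%N] = [set t | (N t <= m)%N] `|` [set t | N t = m.+1] by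
    apply/funext => t; apply/propext; split => /= h; lia.
  exact: measurableU.
have mlt : forall m, measurable [set t | (N t < m)%N].
  case => [|m]; last exact: mle.
  have -> : [set t | (N t < 0)%N] = set0 by apply/funext => t; apply/propext; split => /= h; lia.
  exact: measurable0.
set u := fine (P A).
set th := theta01 theta.
pose Hf (a : R) := a * u * (1 + th * ((1 - a) * (1 - u))).
have Hc : forall m, fine (P ([set t | (N t <= m)%N] `&` A)) = Hf (fine (P [set t | (N t <= m)%N])).
  have [hs|hs] := pselect (le_supA P N 1).
    move=> m; have [_ Hk] := HF 1%N isT hs.
    have := Hk m (fun _ => x); rewrite FGM2 unlift_none.
    case: (unliftP ord0 (ord_max : 'I_2)) => [j _|/(congr1 val)//].
    have -> : [set t | forall i : 'I_1, X i.+1 t <= x] = A.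
      apply/funext => t; apply/propext; split => [h|h i]; first exact: (h ord0).
      by rewrite (ord1 i).
    by move=> h; rewrite /Hf /th /theta01 set01; exact: h.
  have h0 : forall m, (0 < m)%N -> P [set t | N t = m] = 0.
    move=> m hm.
    have e : fine (P [set t | N t = m]) = 0.
      apply/eqP; rewrite eq_le pr_ge0 andbT leNgt; apply/negP => h.
      by apply: hs; exists m; split.
    by rewrite (prE P (mN m)) e.
  have mpos : measurable [set t | (0 < N t)%N].
    have -> : [set t | (0 < N t)%N] = ~` [set t | (N t <= 0)%N] by
      apply/funext => t; apply/propext; split => /= h; lia.
    exact: measurableC.
  have hpos : P [set t | (0 < N t)%N] = 0.
    have -> : [set t | (0 < N t)%N] = \bigcup_(i in setT) [set t | N t = i.+1].
      apply/funext => t; apply/propext; split => /= [h|[i _ h]].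
        by exists (N t).-1 => //=; rewrite prednK.
      by rewrite h.
    rewrite measure_bigcup //; first by rewrite eseries0 // => i _ _; exact: h0.
    move=> i j _ _ [t /= [h1 h2]]; by rewrite h1 in h2; case: h2.
  move=> m.
  have hc : P (~` [set t | (N t <= m)%N]) = 0.
    apply: (subset_measure0 _ mpos _ hpos); first exact: measurableC.
    move=> t /= h; lia.
  have ha : fine (P [set t | (N t <= m)%N]) = 1.
    have := prC P _ (mle m); rewrite hc /= => h; lra.
  have hA : fine (P ([set t | (N t <= m)%N] `&` A)) = u.
    have := prU P _ _ (measurableI _ _ (mle m) mA) (measurableI _ _ (measurableC (mle m)) mA) _.
    rewrite -setIUl setUv setTI => h.
      rewrite /u h.
      have z : P (~` [set t | (N t <= m)%N] `&` A) = 0.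
        apply: (subset_measure0 _ _ _ hc).
        - by apply: measurableI => //; exact: measurableC.
        - exact: measurableC.
        - by move=> t [].
      by rewrite z /= addr0.
    by apply/funext => t; apply/propext; split => // [[[h1 _] [h2 _]]].
  by rewrite /Hf ha hA; ring.
set Ble := [set t | (N t <= n)%N].
set Blt := [set t | (N t < n)%N].
set E := [set t | N t = n].
have mE : measurable E := mN n.
have mBle : measurable Ble := mle n.
have mBlt : measurable Blt := mlt n.
have Hc' : forall m, fine (P ([set t | (N t < m)%N] `&` A)) = Hf (fine (P [set t | (N t < m)%N])).
  case => [|m]; last exact: Hc.
  have -> : [set t | (N t < 0)%N] = set0 by apply/funext => t; apply/propext; split => /= h; lia.
  by rewrite set0I measure0 /Hf /=; ring.
have e1 : fine (P (Ble `&` A)) = fine (P (Blt `&` A)) + fine (P (A `&` E)).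
  rewrite -prU; first congr (fine (P _)).
  - apply/funext => t; apply/propext; rewrite /Ble /Blt /E /=.
    split => [[h1 h2]|[[h1 h2]|[h1 h2]]].
      by case: (ltnP (N t) n) => h; [left|right]; split => //; lia.
    by split => //; lia.
    by split => //; lia.
  - exact: measurableI (mlt n) mA.
  - exact: measurableI mA (mN n).
  - by apply/funext => t; apply/propext; split => // [[[h1 _] [_ h2]]]; rewrite /Blt /E /= in h1 h2; lia.
have e2 : fine (P Ble) = fine (P Blt) + fine (P E).
  rewrite -prU; first congr (fine (P _)).
  - apply/funext => t; apply/propext; rewrite /Ble /Blt /E /=.
    split => [h1|[h1|h1]]; lia.
  - exact: mlt.
  - exact: mN.
  - by apply/funext => t; apply/propext; split => // [[h1 h2]]; rewrite /Blt /E /= in h1 h2; lia.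
have pmax : pmf_max P N n = fine (P E) * fine (P Ble) + fine (P Blt) * fine (P E).
  rewrite /pmf_max /pr2 -prXU //.
  - congr (fine (_ _)); apply/funext => t; apply/propext; rewrite /Ble /Blt /E /setX /=.
    split => [h|[[h1 h2]|[h1 h2]]]; lia.
  - by apply/funext => t; apply/propext; split => // [[[h1 _] [h2 _]]]; rewrite /Blt /E /= in h1 h2; lia.
have pmin : pmf_min P N n = fine (P E) * fine (P (~` Blt)) + fine (P (~` Ble)) * fine (P E).
  rewrite /pmf_min /pr2 -prXU //; try exact: measurableC.
  - congr (fine (_ _)); apply/funext => t; apply/propext; rewrite /Ble /Blt /E /setX /=.
    split => [h|[[h1 h2]|[h1 h2]]]; lia.
  - by apply/funext => t; apply/propext; split => // [[[h1 _] [h2 _]]]; rewrite /Ble /E /= in h1 h2; lia.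
have cmax : cdf_max P (X 1%N) x = u * u.
  rewrite /cdf_max /pr2 -prX //; congr (fine (_ _)).
  apply/funext => t; apply/propext; rewrite /A /setX /= ge_max; split => [/andP//|[h1 h2]].
  by rewrite h1 h2.
have cmin : cdf_min P (X 1%N) x = u * 1 + (1 - u) * u.
  rewrite -(prC P _ mA) -(prT P) /cdf_min /pr2 -prXU //; try exact: measurableC.
  - congr (fine (_ _)); apply/funext => t; apply/propext; rewrite /A /setX /= ge_min.
    split => [/orP[h|h]|[[h1 _]|[h1 h2]]].
    + by left.
    + by case: (lerP (X 1%N t.1) x) => h'; [left|right].
    + by rewrite h1.
    + by rewrite h2 orbT.
  - by apply/funext => t; apply/propext; split => // [[[h1 _] [h2 _]]].
have ca := prC P _ (mle n).
have cb := prC P _ (mlt n).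
rewrite -/Ble in ca; rewrite -/Blt in cb.
have ep : pmfN P N n = fine (P E) by [].
have ecd : cond_cdf P N (X 1%N) n x = fine (P (A `&` E)) / fine (P E) by [].
have eu : cdfR P (X 1%N) x = u by [].
have pn0 : fine (P E) != 0 by rewrite -ep gt_eqF.
rewrite ecd ep eu pmax pmin cmax cmin ca cb.
have eAE : fine (P (A `&` E)) = Hf (fine (P Ble)) - Hf (fine (P Blt)).
  by rewrite -Hc -Hc' -/Ble -/Blt e1 addrC addKr.
rewrite eAE /Hf.
move: pn0; rewrite e2 => pn0.
rewrite !big_bool /=.
split; field => //.
Qed.
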